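(* Let $\Gamma\subset PGL_{2n+2}(\mathbb{C})$ be a group of type $\mathcal{L}$, and suppose the homogeneous coordinates $[z':z'']$ are such that there is $R>0$ with $V_R\subset\Omega(\Gamma)$ and $g(V_R)\cap V_R=\emptyset$ for every $g\in\Gamma\setminus\{1\}$. Then the set $\mathcal{R}=\{\|C_g^{-1}\|: g\in\Gamma\setminus\{1\}\}$ is bounded in $\mathbb{R}$ if and only if the closure $\bar F$ of the $F$-region contains $V_{R'}$ for some $R'>0$.
   Context: $z'=(z^0,\dots,z^n)$, $z''=(z^{n+1},\dots,z^{2n+1})$; $V_R=\{[z':z'']\in\mathbb{P}^{2n+1}:\|z'\|>R\|z''\|\}$; $\|\cdot\|$ is the Euclidean norm and the operator norm. Each $g\in\Gamma\setminus\{1\}$ has a representative $\begin{pmatrix}A_g&B_g\\C_g&D_g\end{pmatrix}\in SL_{2n+2}(\mathbb{C})$ with $(n+1)\times(n+1)$ blocks, and under the hypothesis $C_g$ is invertible (norms below do not depend on the choice of representative). Put $\bar\Delta_g=\{[z':z'']:\|z''\|\le\|C_gz'+D_gz''\|\}$, $\bar\Delta=\bigcap_{g\in\Gamma\setminus\{1\}}\bar\Delta_g$, and the $F$-region $F=\operatorname{Int}\bar\Delta$. Type $\mathcal{L}$: an $n$-plane is an $n$-dimensional projective linear subspace of $\mathbb{P}^{2n+1}$; with $\mathcal{G}\subset\mathbb{P}^N=\mathbb{P}(\Lambda^{n+1}\mathbb{C}^{2n+2})$ the Plücker-embedded Grassmannian, $\hat\ell$ the Plücker point of $\ell$ and $\hat\sigma$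 the induced action; the limit image of a sequence of distinct projective transformations whose representatives (normalized so the largest entry has absolute value $1$) converge to $T$ is $\mathbb{P}(\operatorname{Im}T)$; a sequence in discrete $\Gamma$ is normal if it is of distinct elements and both it and $(\hat\sigma_\nu)$ have convergent normalized representatives; limit $n$-planes are those $\ell$ with $\hat\ell$ in the limit image of some $(\hat\sigma_\nu)$, $(\sigma_\nu)$ normal; $\Omega(\Gamma)$ is the complement of their union; $\Gamma$ is of type $\mathcal{L}$ if discrete and $\Omega(\Gamma)$ contains a domain containing an $n$-plane. *)

(* Defs.v *)
From mathcomp Require Import all_boot all_order all_algebra.
From mathcomp Require Import complex.
From mathcomp Require Import classical_sets reals.
Set Implicit Arguments. Unset Strict Implicit. Unset Printing Implicit Defensive.
Import Order.TTheory GRing.Theory Num.Theory.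
Local Open Scope ring_scope.
Local Open Scope classical_set_scope.

Section Defs.
Variable R : realType.
Local Notation C := R[i].
Variable n : nat.

(* m = 2n+2 ; C^{2n+2} = C^{n+1} x C^{n+1}, z = (z', z'') *)
Local Notation m := (n.+1 + n.+1)%N.

Definition cabs (z : C) : R := Num.sqrt (@complex.Re R z ^+ 2 + @complex.Im R z ^+ 2).

Definition vnorm k (v : 'cV[C]_k) : R := Num.sqrt (\sum_i cabs (v i 0) ^+ 2).

Definition opnorm k (M : 'M[C]_k) : R :=
  sup [set r : R | exists v : 'cV[C]_k, vnorm v = 1 /\ r = vnorm (M *m v)].

Definition zp (z : 'cV[C]_m) : 'cV[C]_n.+1 := usubmx z.
Definition zpp (z : 'cV[C]_m) : 'cV[C]_n.+1 := dsubmx z.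

(* ---------- projective space P^{2n+1} ----------
   A subset X of P^{2n+1} is represented by its cone: the predicate on
   nonzero vectors z such that [z] is in X (scale invariant).  *)
Definition pset (X : set 'cV[C]_m) :=
  forall z c, X z -> c != 0 -> X (c *: z).

(* interior and closure in P^{2n+1} (computed on cones in C^m \ {0}, which
   is equivalent since C^m \ {0} -> P^{2n+1} is an open quotient map) *)
Definition pint (X : set 'cV[C]_m) : set 'cV[C]_m := fun z =>
  z != 0 /\ exists e : R, 0 < e /\
    forall w, w != 0 -> vnorm (w - z) < e -> X w.

Definition pclosure (X : set 'cV[C]_m) : set 'cV[C]_m := fun z =>
  z != 0 /\ forall e : R, 0 < e ->
    exists w, [/\ X w, w != 0 & vnorm (w - z) < e].

Definition popen (U : set 'cV[C]_m) := pset U /\ (forall z, U z -> pint U z).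

Definition pdomain (U : set 'cV[C]_m) :=
  [/\ popen U, exists z, U z &
      forall U1 U2, popen U1 -> popen U2 ->
        (forall z, U z <-> U1 z \/ U2 z) ->
        (forall z, ~ (U1 z /\ U2 z)) ->
        (forall z, ~ U1 z) \/ (forall z, ~ U2 z)].

Definition VR (r : R) : set 'cV[C]_m := fun z =>
  z != 0 /\ vnorm (zp z) > r * vnorm (zpp z).

(* ---------- n-planes and Plücker coordinates ----------
   An n-plane of P^{2n+1} is given by a (2n+2) x (n+1) matrix P of rank n+1
   (its columns span the corresponding (n+1)-dim. linear subspace). *)
Definition nplane (P : 'M[C]_(m, n.+1)) := \rank P = n.+1.

Definition on_plane (P : 'M[C]_(m, n.+1)) (z : 'cV[C]_m) :=
  z != 0 /\ exists c : 'cV[C]_n.+1, z = P *m c.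

(* Index set of the standard basis of Lambda^{n+1} C^{2n+2}:
   the (n+1)-element subsets of {0,...,2n+1}. *)
Definition Kidx := {S : {set 'I_m} | #|S| == n.+1}.

Definition i0 : 'I_m := lshift n.+1 (ord0 : 'I_n.+1).

Definition sel (S : Kidx) (i : 'I_n.+1) : 'I_m := nth i0 (enum (val S)) i.

(* Plücker point of the plane spanned by P (coordinates in the basis
   e_{i_0} /\ ... /\ e_{i_n}, i_0 < ... < i_n) *)
Definition plucker (P : 'M[C]_(m, n.+1)) : Kidx -> C :=
  fun S => \det (rowsub (sel S) P).

(* induced action sigma^ on Lambda^{n+1} C^{2n+2}: (n+1)-th compound matrix *)
Definition compound (A : 'M[C]_m) : Kidx -> Kidx -> C :=
  fun J I => \det (mxsub (sel J) (sel I) A).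

Definition normalized (I J : finType) (M : I -> J -> C) :=
  (forall i j, cabs (M i j) <= 1) /\ exists i j, cabs (M i j) = 1.

Definition mx_cvg (I J : finType) (M : nat -> I -> J -> C) (T : I -> J -> C) :=
  forall e : R, 0 < e -> exists N, forall k, (N <= k)%N ->
    forall i j, cabs (M k i j - T i j) < e.

(* ---------- the group Gamma ----------
   Gamma < PGL_{2n+2}(C) is represented by its preimage S in SL_{2n+2}(C),
   i.e. by the set of all SL-representatives of elements of Gamma. *)
Definition SL_preimage (S : set 'M[C]_m) :=
  [/\ forall A, S A -> \det A = 1,
      S 1%:M,
      forall A B, S A -> S B -> S (A *m B),
      forall A, S A -> S (invmx A) &
      forall w : C, w ^+ m = 1 -> S (w%:M)].

(* A represents the identity of PGL iff it is scalar *)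
Definition is_scalar (A : 'M[C]_m) := exists c : C, A = c%:M.

Definition proj_eq k l (A B : 'M[C]_(k, l)) := exists c : C, c != 0 /\ A = c *: B.

(* discreteness of Gamma in PGL_{2n+2}(C) (equivalently of its preimage in
   SL_{2n+2}(C), the covering SL -> PGL being finite): every element is
   isolated *)
Definition discrete (S : set 'M[C]_m) :=
  forall A, S A -> exists e : R, 0 < e /\
    forall B, S B -> (forall i j, cabs (B i j - A i j) < e) -> B = A.

(* a normal sequence of Gamma, together with the limits T (of normalized
   representatives of sigma_nu) and That (of normalized representatives of
   the induced maps sigma^_nu) *)
Definition normal_seq (S : set 'M[C]_m) (sigma : nat -> 'M[C]_m)
    (T : 'I_m -> 'I_m -> C) (That : Kidx -> Kidx -> C) :=
  [/\ forall k, S (sigma k),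
      forall k l, k <> l -> ~ proj_eq (sigma k) (sigma l),
      (exists M : nat -> 'I_m -> 'I_m -> C,
          [/\ forall k, exists c : C, c != 0 /\
                 forall i j, M k i j = c * sigma k i j,
              forall k, normalized (M k) &
              mx_cvg M T]) &
      (exists N : nat -> Kidx -> Kidx -> C,
          [/\ forall k, exists c : C, c != 0 /\
                 forall I J, N k I J = c * compound (sigma k) I J,
              forall k, normalized (N k) &
              mx_cvg N That])].

(* limit image P(Im T) contains the point with coordinates x (x != 0) *)
Definition in_limit_image (That : Kidx -> Kidx -> C) (x : Kidx -> C) :=
  exists w : Kidx -> C, forall J, x J = \sum_I That J I * w I.

Definition limit_plane (S : set 'M[C]_m) (P : 'M[C]_(m, n.+1)) :=
  nplane P /\ exists sigma T That,
    normal_seq S sigma T That /\ in_limit_image That (plucker P).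

Definition Omega (S : set 'M[C]_m) : set 'cV[C]_m := fun z =>
  z != 0 /\ ~ exists P, limit_plane S P /\ on_plane P z.

Definition typeL (S : set 'M[C]_m) :=
  discrete S /\ exists U, [/\ pdomain U, (forall z, U z -> Omega S z) &
     exists P, nplane P /\ forall z, on_plane P z -> U z].

Definition Cblk (A : 'M[C]_m) : 'M[C]_n.+1 := dlsubmx A.
Definition Dblk (A : 'M[C]_m) : 'M[C]_n.+1 := drsubmx A.

Definition Delta_g (A : 'M[C]_m) : set 'cV[C]_m := fun z =>
  z != 0 /\ vnorm (zpp z) <= vnorm (Cblk A *m zp z + Dblk A *m zpp z).

Definition Delta (S : set 'M[C]_m) : set 'cV[C]_m := fun z =>
  z != 0 /\ forall A, S A -> ~ is_scalar A -> Delta_g A z.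

Definition Fregion (S : set 'M[C]_m) : set 'cV[C]_m := pint (Delta S).

End Defs.

(* Main.v *)
Require Import Defs.
From mathcomp Require Import all_boot all_order all_algebra.
From mathcomp Require Import complex.
From mathcomp Require Import classical_sets reals.
From mathcomp Require Import ring lra.
Import Order.TTheory GRing.Theory Num.Theory.
Local Open Scope ring_scope.
Local Open Scope classical_set_scope.

Section Aux.
Context {R : realType}.
Local Notation C := R[i].

Lemma cabsE (z : C) : cabs z = Normc.normc z.
Proof. by case: z. Qed.

Lemma cabs_ge0 (z : C) : 0 <= cabs z.
Proof. exact: sqrtr_ge0. Qed.

Lemma cabsD (x y : C) : cabs (x + y) <= cabs x + cabs y.
Proof. rewrite !cabsE; exact: (@le_normcD R x y). Qed.

Lemma cabsM (x y : C) : cabs (x * y) = cabs x * cabs y.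
Proof. by rewrite !cabsE Normc.normcM. Qed.

Lemma cabs0 : cabs (0 : C) = 0.
Proof. by rewrite cabsE Normc.normc0. Qed.

Lemma cabs_eq0 (x : C) : cabs x = 0 -> x = 0.
Proof. rewrite cabsE; exact: Normc.eq0_normc. Qed.

Lemma cabsN (x : C) : cabs (- x) = cabs x.
Proof. rewrite !cabsE; exact: (@normcN R x). Qed.

Lemma cabsR (x : R) : cabs (x%:C%C) = `|x|.
Proof. by rewrite /cabs /= expr0n /= addr0 sqrtr_sqr. Qed.

Lemma minkowski k (f g : 'I_k -> R) :
  Num.sqrt (\sum_i (f i + g i) ^+ 2) <=
  Num.sqrt (\sum_i f i ^+ 2) + Num.sqrt (\sum_i g i ^+ 2).
Proof.
elim: k f g => [|k IH] f g; first by rewrite !big_ord0 sqrtr0 addr0.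
rewrite !big_ord_recr /=.
have := IH (fun i => f (widen_ord (leqnSn k) i)) (fun i => g (widen_ord (leqnSn k) i)).
set S := \sum_(i < k) _; set X2 := \sum_(i < k) _; set Y2 := \sum_(i < k) _.
move=> IHk.
have S0 : 0 <= S by apply: sumr_ge0 => i _; exact: sqr_ge0.
have X0 : 0 <= X2 by apply: sumr_ge0 => i _; exact: sqr_ge0.
have Y0 : 0 <= Y2 by apply: sumr_ge0 => i _; exact: sqr_ge0.
set a := f ord_max; set b := g ord_max.
set X := Num.sqrt X2 in IHk *; set Y := Num.sqrt Y2 in IHk *.
have hX : X ^+ 2 = X2 by rewrite sqr_sqrtr.
have hY : Y ^+ 2 = Y2 by rewrite sqr_sqrtr.
have hXp : 0 <= X by exact: sqrtr_ge0.
have hYp : 0 <= Y by exact: sqrtr_ge0.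
have hS : S <= (X + Y) ^+ 2.
  by have := IHk; rewrite -(@ler_pXn2r _ 2) ?nnegrE ?sqrtr_ge0 ?addr_ge0 // sqr_sqrtr.
set p := Num.sqrt (X2 + a ^+ 2); set q := Num.sqrt (Y2 + b ^+ 2).
have hp : p ^+ 2 = X2 + a ^+ 2 by rewrite sqr_sqrtr // addr_ge0 // sqr_ge0.
have hq : q ^+ 2 = Y2 + b ^+ 2 by rewrite sqr_sqrtr // addr_ge0 // sqr_ge0.
have pp : 0 <= p by exact: sqrtr_ge0.
have qp : 0 <= q by exact: sqrtr_ge0.
have key : X * Y + a * b <= p * q.
  have h1 : (X * Y + a * b) ^+ 2 <= (p * q) ^+ 2.
    rewrite exprMn hp hq -hX -hY.
    have := sqr_ge0 (X * b - a * Y). move=> h. nra.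
  have pq0 : 0 <= p * q by exact: mulr_ge0.
  case: (lerP (X * Y + a * b) 0) => h; first by apply: le_trans pq0.
  rewrite -(@ler_pXn2r _ 2). all: try done. all: try (rewrite nnegrE; exact: ltW).
rewrite -(@ler_pXn2r _ 2) ?nnegrE ?sqrtr_ge0 ?addr_ge0 //.
rewrite sqr_sqrtr; last by apply: addr_ge0 => //; exact: sqr_ge0.
rewrite sqrrD [X in _ <= X]sqrrD hp hq. rewrite -hX -hY in hS *. nra.
Qed.

Section VN.
Implicit Types (k p : nat).

Lemma vsum_ge0 {k} (v : 'cV[C]_k) : 0 <= \sum_i cabs (v i 0) ^+ 2.
Proof. by apply: sumr_ge0 => i _; exact: sqr_ge0. Qed.

Lemma vnorm_ge0 {k} (v : 'cV[C]_k) : 0 <= vnorm v.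
Proof. exact: sqrtr_ge0. Qed.

Lemma vnorm_sq {k} (v : 'cV[C]_k) : vnorm v ^+ 2 = \sum_i cabs (v i 0) ^+ 2.
Proof. by rewrite sqr_sqrtr // vsum_ge0. Qed.

Lemma vnorm0 {k} : vnorm (0 : 'cV[C]_k) = 0.
Proof.
rewrite /vnorm big1 ?sqrtr0 // => i _; by rewrite mxE cabs0 expr0n.
Qed.

Lemma vnorm_eq0 {k} (v : 'cV[C]_k) : vnorm v = 0 -> v = 0.
Proof.
move=> h; have : vnorm v ^+ 2 = 0 by rewrite h expr0n.
rewrite vnorm_sq => /eqP; rewrite psumr_eq0; last by move=> i _; exact: sqr_ge0.
move=> /allP H; apply/matrixP => i j; rewrite (ord1 j) mxE.
apply: cabs_eq0; have := H i (mem_index_enum i); rewrite /= sqrf_eq0.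
by move/eqP.
Qed.

Lemma vnorm_gt0 {k} (v : 'cV[C]_k) : v != 0 -> 0 < vnorm v.
Proof.
move=> nz; rewrite lt_def vnorm_ge0 andbT; apply/eqP => h.
by move: nz; rewrite (vnorm_eq0 _ h) eqxx.
Qed.

Lemma vnormZ {k} (c : C) (v : 'cV[C]_k) : vnorm (c *: v) = cabs c * vnorm v.
Proof.
rewrite /vnorm.
rewrite (eq_bigr (fun i => cabs c ^+ 2 * cabs (v i 0) ^+ 2)); last first.
  by move=> i _; rewrite mxE cabsM exprMn.
by rewrite -mulr_sumr sqrtrM ?sqr_ge0 // sqrtr_sqr ger0_norm // cabs_ge0.
Qed.

Lemma vnormD {k} (u v : 'cV[C]_k) : vnorm (u + v) <= vnorm u + vnorm v.
Proof.
apply: le_trans (@minkowski k (fun i => cabs (u i 0)) (fun i => cabs (v i 0))).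
rewrite /vnorm ler_sqrt; last by apply: sumr_ge0 => i _; exact: sqr_ge0.
apply: ler_sum => i _; rewrite mxE.
rewrite ler_sqr ?nnegrE ?addr_ge0 ?cabs_ge0 //; exact: cabsD.
Qed.

Lemma vnormN {k} (v : 'cV[C]_k) : vnorm (- v) = vnorm v.
Proof.
have c1 : cabs (1 : C) = 1 by rewrite /cabs /= expr1n expr0n addr0 sqrtr1.
by rewrite -scaleN1r vnormZ cabsN c1 mul1r.
Qed.

Lemma vnormB_ge {k} (u v : 'cV[C]_k) : vnorm u - vnorm v <= vnorm (u - v).
Proof.
have := vnormD (u - v) v; rewrite subrK => h; lra.
Qed.

Lemma vnorm_entry {k} (v : 'cV[C]_k) i : cabs (v i 0) <= vnorm v.
Proof.
rewrite -(@ler_pXn2r _ 2) ?nnegrE ?cabs_ge0 ?vnorm_ge0 // vnorm_sq.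
rewrite (bigD1 i) //= lerDl; apply: sumr_ge0 => j _; exact: sqr_ge0.
Qed.

Lemma vnorm_sum {k p} (F : 'I_p -> 'cV[C]_k) :
  vnorm (\sum_j F j) <= \sum_j vnorm (F j).
Proof.
elim/big_ind2: _ => //; first by rewrite vnorm0.
by move=> x1 x2 y1 y2 h1 h2; apply: le_trans (vnormD _ _) _; exact: lerD.
Qed.

Lemma mx_bound {k p} (M : 'M[C]_(p, k)) :
  exists K, 0 <= K /\ forall v, vnorm (M *m v) <= K * vnorm v.
Proof.
exists (\sum_j vnorm (col j M)); split.
  by apply: sumr_ge0 => j _; exact: vnorm_ge0.
move=> v.
have -> : M *m v = \sum_j (v j 0 *: col j M).
  apply/matrixP => i l; rewrite (ord1 l) !mxE summxE.
  by apply: eq_bigr => j _; rewrite !mxE mulrC.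
apply: le_trans (vnorm_sum _) _; rewrite mulr_suml; apply: ler_sum => j _.
rewrite vnormZ mulrC; apply: ler_wpM2l; first exact: vnorm_ge0.
exact: vnorm_entry.
Qed.

Lemma vnorm_col {k1 k2} (a : 'cV[C]_k1) (b : 'cV[C]_k2) :
  vnorm (col_mx a b) ^+ 2 = vnorm a ^+ 2 + vnorm b ^+ 2.
Proof.
rewrite !vnorm_sq big_split_ord /=; congr (_ + _); apply: eq_bigr => i _.
  by rewrite col_mxEu.
by rewrite col_mxEd.
Qed.

Lemma vnorm_usub {k1 k2} (z : 'cV[C]_(k1 + k2)) : vnorm (usubmx z) <= vnorm z.
Proof.
rewrite -[z in X in _ <= X]vsubmxK.
rewrite -(@ler_pXn2r _ 2) ?nnegrE ?vnorm_ge0 // vnorm_col lerDl sqr_ge0 //.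
Qed.

Lemma vnorm_dsub {k1 k2} (z : 'cV[C]_(k1 + k2)) : vnorm (dsubmx z) <= vnorm z.
Proof.
rewrite -[z in X in _ <= X]vsubmxK.
rewrite -(@ler_pXn2r _ 2) ?nnegrE ?vnorm_ge0 // vnorm_col lerDr sqr_ge0 //.
Qed.

End VN.
End Aux.
Section Main.
Variable R : realType.
Variable n : nat.
Local Notation C := R[i].
Local Notation m := (n.+1 + n.+1)%N.

Lemma dsub_mul (A : 'M[C]_m) z :
  dsubmx (A *m z) = Cblk A *m zp z + Dblk A *m zpp z.
Proof.
by rewrite -mul_dsub_mx -[dsubmx A]hsubmxK -[z in _ *m z]vsubmxK mul_row_col.
Qed.

Lemma not_unit_ker {k} (M : 'M[C]_k) :
  M \notin unitmx -> exists x : 'cV[C]_k, x != 0 /\ M *m x = 0.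
Proof.
move=> nu.
have nz : cokermx M != 0 by rewrite cokermx_eq0 row_full_unit.
have [j hj] : exists j, col j (cokermx M) != 0.
  apply/existsP; apply: contraR nz => /existsPn H; apply/eqP/matrixP => i j.
  by have := H j; rewrite negbK => /eqP/matrixP/(_ i 0); rewrite !mxE.
exists (col j (cokermx M)); split => //.
have -> : M *m col j (cokermx M) = col j (M *m cokermx M).
  by apply/matrixP => i l; rewrite !mxE; apply: eq_bigr => t _; rewrite !mxE.
by rewrite mulmx_coker; apply/matrixP => i l; rewrite !mxE.
Qed.

Lemma zpB (a b : 'cV[C]_m) : zp (a - b) = zp a - zp b.
Proof. by apply/matrixP => i j; rewrite !mxE. Qed.
Lemma zppB (a b : 'cV[C]_m) : zpp (a - b) = zpp a - zpp b.
Proof. by apply/matrixP => i j; rewrite !mxE. Qed.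

Lemma zp_col (a b : 'cV[C]_n.+1) : zp (col_mx a b) = a.
Proof. exact: col_mxKu. Qed.
Lemma zpp_col (a b : 'cV[C]_n.+1) : zpp (col_mx a b) = b.
Proof. exact: col_mxKd. Qed.

Lemma VR_dsub0 (r : R) (w : 'cV[C]_m) : w != 0 -> zpp w = 0 -> VR r w.
Proof.
move=> nz h; split => //; rewrite h vnorm0 mulr0; apply: vnorm_gt0.
apply: contraNneq nz => h'; by rewrite -[w]vsubmxK; rewrite /zp /zpp in h h'; rewrite h h' col_mx0.
Qed.

Lemma normalize {k} (y : 'cV[C]_k) : y != 0 ->
  vnorm (((vnorm y)^-1)%:C%C *: y) = 1.
Proof.
move=> nz; have p := vnorm_gt0 _ nz.
by rewrite vnormZ cabsR ger0_norm ?invr_ge0 ?ltW // mulVf // gt_eqF.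
Qed.

Lemma opnorm_ub {k} (M : 'M[C]_k) y : vnorm (M *m y) <= opnorm M * vnorm y.
Proof.
have [->|nz] := eqVneq y 0; first by rewrite mulmx0 !vnorm0 mulr0.
have [K [K0 HK]] := mx_bound M.
have ub : has_ubound [set r : R | exists v : 'cV[C]_k, vnorm v = 1 /\ r = vnorm (M *m v)].
  by exists K => _ [v [hv ->]]; have := HK v; rewrite hv mulr1.
set c := ((vnorm y)^-1)%:C%C.
have := ub_le_sup ub; move=> /(_ (vnorm (M *m (c *: y)))) h.
have {}h : vnorm (M *m (c *: y)) <= opnorm M by apply: h; exists (c *: y); split => //; exact: normalize.
move: h; rewrite -scalemxAr vnormZ cabsR ger0_norm ?invr_ge0 ?vnorm_ge0 //.
have p := vnorm_gt0 _ nz.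
by rewrite mulrC -ler_pdivlMr ?invr_gt0 // invrK.
Qed.


Section Grp.
Variables (S : set 'M[C]_m) (r : R).
Hypothesis hSL : SL_preimage S.
Hypothesis H5 : forall A, S A -> ~ is_scalar A -> forall z, VR r z -> ~ VR r (A *m z).

Lemma S_unit {A} : S A -> A \in unitmx.
Proof. by case: hSL => hdet _ _ _ _ /hdet h; rewrite unitmxE h unitr1. Qed.

Lemma S_inv {A} : S A -> ~ is_scalar A -> S (invmx A) /\ ~ is_scalar (invmx A).
Proof.
case: hSL => _ _ _ hinv _ SA ns; split; first exact: hinv.
move=> [c hc]; apply: ns; exists c^-1.
by rewrite -[A]invmxK hc invmx_scalar.
Qed.

Lemma mul_nz {A} (z : 'cV[C]_m) : S A -> z != 0 -> A *m z != 0.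
Proof.
move=> SA nz; apply: contraNneq nz => h.
by rewrite -(mulKmx (S_unit SA) z) h mulmx0.
Qed.

Lemma C_unit {A} : S A -> ~ is_scalar A -> Cblk A \in unitmx.
Proof.
move=> SA ns; apply: contraT => /not_unit_ker [x [xnz hx]].
set z := col_mx x (0 : 'cV[C]_n.+1).
have znz : z != 0.
  by apply: contraNneq xnz => h; rewrite -(zp_col x 0) -/z h /zp linear0.
have Vz : VR r z.
  by apply: VR_dsub0 => //; rewrite zpp_col.
suff : False by []. apply: (H5 _ SA ns _ Vz); apply: VR_dsub0; first exact: mul_nz.
by rewrite /zpp dsub_mul zp_col zpp_col hx mulmx0 addr0.
Qed.

Lemma CK {A} : S A -> ~ is_scalar A ->
  Cblk A *m (invmx (Cblk A) *m Dblk A) = Dblk A.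
Proof. by move=> SA ns; rewrite mulmxA mulmxV ?mul1mx // C_unit. Qed.

Lemma K_bound A u : S A -> ~ is_scalar A ->
  vnorm (invmx (Cblk A) *m Dblk A *m u) <= r * vnorm u.
Proof.
move=> SA ns.
have [->|unz] := eqVneq u 0; first by rewrite mulmx0 !vnorm0 mulr0.
set K := invmx (Cblk A) *m Dblk A.
set z := col_mx (- (K *m u)) u.
have znz : z != 0.
  by apply: contraNneq unz => h; rewrite -(zpp_col (- (K *m u)) u) -/z h /zpp linear0.
have Vw : VR r (A *m z).
  apply: VR_dsub0; first exact: mul_nz.
  rewrite /zpp dsub_mul zp_col zpp_col mulmxN /K mulmxA.
  by rewrite (CK SA ns) addNr.
have [SAi nsi] := S_inv SA ns.
have := H5 _ SAi nsi _ Vw; rewrite mulKmx ?S_unit // => nV.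
rewrite leNgt; apply/negP => h; apply: nV; split => //.
by rewrite zp_col zpp_col vnormN.
Qed.


Lemma ar1 {r0 Bp a p X d : R} : 0 <= a -> (r0 + Bp + 1) * a < p ->
  p - r0 * a <= X -> X <= Bp * d -> Bp * d <= Bp * a -> False.
Proof. move=> *; nra. Qed.

Lemma ball_VR (R0 : R) (z w : 'cV[C]_m) e :
  0 < R0 -> e * (1 + R0) = vnorm (zp z) - R0 * vnorm (zpp z) ->
  vnorm (w - z) < e -> VR R0 z -> w != 0 -> VR R0 w.
Proof.
move=> R0p he hd [znz hz] wnz; split => //.
have d1 : vnorm (zp z) - vnorm (zp w) <= vnorm (w - z).
  apply: le_trans (vnormB_ge _ _) _; rewrite -zpB.
  by apply: le_trans (vnorm_usub _) _; rewrite -opprB vnormN.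
have d2 : vnorm (zpp w) - vnorm (zpp z) <= vnorm (w - z).
  apply: le_trans (vnormB_ge _ _) _; rewrite -zppB.
  exact: vnorm_dsub.
have := vnorm_ge0 (w - z); nra.
Qed.

Lemma dir1 B : 0 < r ->
  (forall A, S A -> ~ is_scalar A -> opnorm (invmx (Cblk A)) <= B) ->
  exists r', 0 < r' /\ forall z, VR r' z -> pclosure (Fregion S) z.
Proof.
move=> r0 HB.
set Bp := `|B|.
have Bp0 : 0 <= Bp by exact: normr_ge0.
have hlow : forall A x, S A -> ~ is_scalar A ->
    vnorm x <= Bp * vnorm (Cblk A *m x).
  move=> A x SA ns.
  have := opnorm_ub (invmx (Cblk A)) (Cblk A *m x).
  rewrite mulmxA mulVmx ?(C_unit SA ns) // mul1mx => h.
  apply: (le_trans h); apply: ler_wpM2r; first exact: vnorm_ge0.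
  exact: le_trans (HB A SA ns) (ler_norm B).
set R0 := r + Bp + 1.
have R0p : 0 < R0 by rewrite /R0; lra.
have inD : forall A w, S A -> ~ is_scalar A -> VR R0 w -> Delta_g A w.
  move=> A w SA ns [wnz hw]; split => //.
  set x := zp w + (invmx (Cblk A) *m Dblk A) *m zpp w.
  have hx : Cblk A *m x = dsubmx (A *m w).
    by rewrite dsub_mul /x mulmxDr mulmxA (CK SA ns).
  have h1 := hlow A x SA ns; rewrite hx dsub_mul in h1.
  have h2 : vnorm (zp w) - r * vnorm (zpp w) <= vnorm x.
    have := vnormB_ge (zp w) (- (invmx (Cblk A) *m Dblk A *m zpp w)).
    rewrite opprK vnormN -/x => h; apply: le_trans h.
    by rewrite lerD2l lerN2 K_bound.
  rewrite leNgt; apply/negP => hlt.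
  have h3 := ler_wpM2l Bp0 (ltW hlt).
  exact: (ar1 (vnorm_ge0 (zpp w)) hw h2 h1 h3).
exists R0; split => // z Vz.
have znz : z != 0 by case: Vz.
split => // e e0; exists z; split => //; last by rewrite subrr vnorm0.
split => //.
set a := vnorm (zp z); set b := vnorm (zpp z).
exists ((a - R0 * b) / (1 + R0)); split.
  rewrite divr_gt0 ?subr_gt0 //; first by case: Vz.
  by rewrite addr_gt0 ?ltr01.
move=> w wnz hw.
have Vw : VR R0 w.
  apply: (@ball_VR R0 z w ((a - R0 * b) / (1 + R0)) R0p _ hw Vz wnz).
  by rewrite -/a -/b mulfVK //; apply: lt0r_neq0; rewrite addr_gt0 ?ltr01.
split => // A SA ns; exact: inD.
Qed.


Lemma ar2 {zz zw dz dw L d e : R} : 0 <= L -> e * (1 + L) = zz - dz ->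
  d < e -> zz - zw <= d -> dw - dz <= L * d -> zw <= dw -> False.
Proof. move=> *; nra. Qed.

Lemma ar3 {t r0 r1 q : R} : 0 < t -> 0 < q -> q * (r0 + r1 + 1) = 1 ->
  r0 * (q * t) + r1 * (q * t) < t.
Proof.
move=> t0 q0 H; have h := congr1 (fun x => x * t) H; simpl in h.
have := mulr_gt0 q0 t0; nra.
Qed.

Lemma ar4 {t q rho y : R} : 0 < rho -> q * rho = 1 -> q * t <= y -> t <= rho * y.
Proof.
move=> r0 hq h; have := ler_wpM2l (ltW r0) h.
by rewrite mulrA (mulrC rho q) hq mul1r.
Qed.

Lemma unit_vec : exists v : 'cV[C]_n.+1, vnorm v = 1.
Proof.
have nz : (const_mx 1 : 'cV[C]_n.+1) != 0.
  by apply/negP => /eqP/matrixP/(_ ord0 ord0); rewrite !mxE; apply/eqP; exact: oner_neq0.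
by eexists; exact: normalize nz.
Qed.

Lemma dir2 r' : 0 < r -> 0 < r' ->
  (forall z, VR r' z -> pclosure (Fregion S) z) ->
  exists B : R, forall A, S A -> ~ is_scalar A -> opnorm (invmx (Cblk A)) <= B.
Proof.
move=> r0 r'0 hcl; exists (r + r' + 1) => A SA ns.
set rho := r + r' + 1.
have rho0 : 0 < rho by rewrite /rho addr_gt0 // addr_gt0.
have inD : forall z, VR r' z -> Delta_g A z.
  move=> z Vz; have znz : z != 0 by case: Vz.
  split => //; rewrite -dsub_mul.
  have [L [L0 HL]] := mx_bound (dsubmx A).
  rewrite leNgt; apply/negP => hlt.
  set g := vnorm (zpp z) - vnorm (dsubmx (A *m z)).
  have L1 : 0 < 1 + L by apply: (lt_le_trans ltr01); rewrite lerDl.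
  have g0 : 0 < g / (1 + L) by rewrite divr_gt0 ?subr_gt0.
  have [_ /(_ _ g0) [w [Fw wnz hwz]]] := hcl z Vz.
  have Dw : Delta S w.
    case: Fw => _ [e' [e'0 He']]; apply: He' => //; by rewrite subrr vnorm0.
  have [_ hDw] := Dw.2 A SA ns; rewrite -dsub_mul in hDw.
  have d1 : vnorm (zpp z) - vnorm (zpp w) <= vnorm (w - z).
    apply: le_trans (vnormB_ge _ _) _; rewrite -zppB.
    by apply: le_trans (vnorm_dsub _) _; rewrite -opprB vnormN.
  have d2 : vnorm (dsubmx (A *m w)) - vnorm (dsubmx (A *m z)) <= L * vnorm (w - z).
    apply: le_trans (vnormB_ge _ _) _.
    by rewrite -!mul_dsub_mx -mulmxBr.
  apply: (ar2 L0 _ hwz d1 d2 hDw).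
  by rewrite mulfVK // gt_eqF.
have hb : forall y, vnorm (invmx (Cblk A) *m y) <= rho * vnorm y.
  move=> y; set s := invmx (Cblk A) *m y.
  have [s0|snz] := eqVneq s 0.
    by rewrite s0 vnorm0 mulr_ge0 ?vnorm_ge0 ?ltW.
  set q := rho^-1.
  have q0 : 0 < q by rewrite invr_gt0.
  have hq : q * rho = 1 by rewrite mulVf ?gt_eqF.
  set u := (q%:C)%C *: s.
  have hu : vnorm u = q * vnorm s by rewrite vnormZ cabsR ger0_norm ?ltW.
  have t0 := vnorm_gt0 _ snz.
  have unz : u != 0.
    apply/negP => /eqP h0; move: hu; rewrite h0 vnorm0 => /esym/eqP.
    by rewrite mulf_eq0 !gt_eqF.
  set K := invmx (Cblk A) *m Dblk A.
  set z := col_mx (s - K *m u) u.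
  have znz : z != 0.
    by apply: contraNneq unz => h; rewrite -(zpp_col (s - K *m u) u) -/z h /zpp linear0.
  have Vz : VR r' z.
    split => //; rewrite zp_col zpp_col.
    apply: lt_le_trans (vnormB_ge _ _).
    rewrite ltrBrDr; apply: le_lt_trans (lerD (lexx _) (K_bound A u SA ns)) _.
    rewrite hu; apply: ar3 t0 q0 _; by rewrite [r' + r]addrC.
  have [_ hD] := inD z Vz; move: hD; rewrite zp_col zpp_col.
  rewrite mulmxBr [Cblk A *m (K *m u)]mulmxA /K (CK SA ns) subrK /s mulKVmx ?(C_unit SA ns) // hu.
  exact: ar4 rho0 hq.
rewrite /opnorm; apply: ge_sup.
  by have [v hv] := unit_vec; exists (vnorm (invmx (Cblk A) *m v)); exists v.
by move=> _ [v [hv ->]]; have := hb v; rewrite hv mulr1.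
Qed.

End Grp.
End Main.

Theorem proposition7p6 (R : realType) (n : nat)
    (S : set 'M[R[i]]_(n.+1 + n.+1)) (r : R) :
  SL_preimage S -> typeL S ->
  0 < r ->
  (forall z, VR r z -> Omega S z) ->
  (forall A, S A -> ~ is_scalar A -> forall z, VR r z -> ~ VR r (A *m z)) ->
  (exists B : R, forall A, S A -> ~ is_scalar A ->
      opnorm (invmx (Cblk A)) <= B)
  <->
  (exists r' : R, 0 < r' /\
      forall z, VR r' z -> pclosure (Fregion S) z).
Proof.
move=> hSL _ r0 _ H5; split.
  by case=> B HB; exact: (@dir1 R n S r hSL H5 B r0 HB).
by case=> r' [r'0 hcl]; exact: (@dir2 R n S r hSL H5 r' r0 r'0 hcl).
Qed.
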